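(* Let $X=\mathbb{Z}$, $\beta\in Sym(X)$ the translation $x\mapsto x+1$, and $n,m\geq1$. Let $c=c(a_1,\dots,a_n,b)$ be a nontrivial cyclically reduced word in $\mathbb{F}_{n+1}=\langle a_1,\dots,a_n,b\rangle$ with exponent sum of $b$ equal to zero, and $d=d(a'_1,\dots,a'_m,b')$ a nontrivial cyclically reduced word in $\mathbb{F}_{m+1}=\langle a'_1,\dots,a'_m,b'\rangle$ with exponent sum of $b'$ equal to zero. Let $\alpha=(\alpha_1,\dots,\alpha_n)\in Sym(X)^n$ be such that, for the action of $\mathbb{F}_{n+1}$ on $X$ given by $a_i\mapsto\alpha_i$, $b\mapsto\beta$ (so $c$ acts as $c(\alpha,\beta)$): the action is faithful and transitive; for every $w\in\mathbb{F}_{n+1}\setminus\langle c\rangle$ there are infinitely many $x$ with $cx=x$, $cwx=wx$, $wx\neq x$; there is a Følner sequence $(A_k)_{k\geq1}$ for this action consisting of pairwise disjoint sets with $|A_k|=k$, each pointwise fixed by $c$; for every $k\geq1$ there are infinitely many $\langle c\rangle$-orbits of size $k$; every $\langle c\rangle$-orbit is finite; and every finite index subgroup of $\mathbb{F}_{n+1}$ acts transitively. Let $\alpha'=(\alpha'_1,\dots,\alpha'_m)\in Sym(X)^m$ satisfy the same properties for $\mathbb{F}_{m+1}$ (via $a'_j\mapsto\alpha'_j$, $b'\mapsto\beta$) and $d$, with Følner sequence $(B_k)_{k\geq1}$. Let $Z=\{\sigma\in Sym(X):\sigma\, c(\alpha,\beta)=d(\alpha',\beta)\,\sigma\}$, with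 the topology of pointwise convergence. Then the set $\mathcal{O}_2=\{\sigma\in Z:\text{there is a subsequence }(k_l)_{l\geq1}\text{ with }\sigma(A_{k_l})=B_{k_l}\text{ for all }l\geq1\}$ is generic in $Z$.
   Context: A subset of a Baire space is meagre if it is a countable union of closed sets with empty interior, and generic (dense $G_\delta$) if its complement is meagre. $Z$ is closed in $Sym(X)$, hence a Baire space. A sequence $(A_k)$ of finite non-empty subsets is Følner for an action of a group $\Gamma$ if $|A_k\triangle gA_k|/|A_k|\to0$ for all $g\in\Gamma$. *)

(* Defs.v *)
From HB Require Import structures.
From mathcomp Require Import all_boot all_order all_algebra.
From mathcomp Require Import finmap.
Set Implicit Arguments. Unset Strict Implicit. Unset Printing Implicit Defensive.
Import Order.TTheory GRing.Theory Num.Theory.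
Local Open Scope ring_scope.

Record sym := Sym { sf : int -> int; sg : int -> int;
  sfK : cancel sf sg; sgK : cancel sg sf }.

Lemma shift_fK : cancel (fun x : int => x + 1) (fun x => x - 1).
Proof. by move=> x; rewrite addrK. Qed.
Lemma shift_gK : cancel (fun x : int => x - 1) (fun x => x + 1).
Proof. by move=> x; rewrite subrK. Qed.
Definition shift : sym := Sym shift_fK shift_gK.

(* a letter (g, true) is g, (g, false) is g^-1 *)
Definition letter (G : eqType) := (G * bool)%type.
Definition word (G : eqType) := seq (letter G).
Definition linv (G : eqType) (l : letter G) : letter G := (l.1, ~~ l.2).
Definition winv (G : eqType) (w : word G) : word G := rev (map (@linv G) w).

Fixpoint reduced (G : eqType) (w : word G) : bool :=
  match w with
  | l :: ((l' :: _) as w') => (l' != linv l) && reduced w'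
  | _ => true
  end.

Definition nontriv_cyc_reduced (G : eqType) (w : word G) : Prop :=
  match w with
  | [::] => False
  | l :: _ => reduced w /\ last l w != linv l
  end.

Fixpoint reduce (G : eqType) (w : word G) : word G :=
  match w with
  | [::] => [::]
  | l :: w0 => match reduce w0 with
               | l' :: w' => if l' == linv l then w' else l :: l' :: w'
               | [::] => [:: l]
               end
  end.

Definition wpow (G : eqType) (w : word G) (j : int) : word G :=
  match j with
  | Posz k => flatten (nseq k w)
  | Negz k => flatten (nseq k.+1 (winv w))
  end.

Definition in_cyclic (G : eqType) (c w : word G) : Prop :=
  exists j : int, reduce w = reduce (wpow c j).

Definition expsum (G : eqType) (g : G) (w : word G) : int :=
  \sum_(l <- w | l.1 == g) (if l.2 then 1 else -1).

(* left action: the word l_1 l_2 ... l_k acts as l_1 o l_2 o ... o l_k *)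
Fixpoint wact (G : eqType) (f : G -> sym) (w : word G) (x : int) : int :=
  match w with
  | [::] => x
  | (g, b) :: w' => (if b then sf (f g) else sg (f g)) (wact f w' x)
  end.

(* generators of F_{n+1}: Some i = a_i, None = b *)
Definition gen (n : nat) := option 'I_n.
Definition interp (n : nat) (alpha : 'I_n -> sym) (beta : sym) : gen n -> sym :=
  fun o => if o is Some i then alpha i else beta.

Definition infinite_int (P : int -> Prop) : Prop :=
  ~ exists s : seq int, forall x, P x -> x \in s.

Section Orbits.
Variables (G : eqType) (f : G -> sym) (c : word G).
Definition in_orbit (x y : int) : Prop :=
  exists j : int, y = wact f (wpow c j) x.
Definition orbit_finite (x : int) : Prop :=
  exists s : seq int, forall y, in_orbit x y -> y \in s.
Definition orbit_size (x : int) (k : nat) : Prop :=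
  exists s : seq int, [/\ uniq s, size s = k & forall y, in_orbit x y <-> y \in s].
(* there are infinitely many <c>-orbits of size k: no finite list of
   points represents all of them *)
Definition infinitely_many_orbits (k : nat) : Prop :=
  ~ exists s : seq int, forall x, orbit_size x k ->
       exists2 y, y \in s & in_orbit y x.
End Orbits.

(* subgroups of the free group on G (as sets of reduced words) *)
Definition subgroup (G : eqType) (H : word G -> Prop) : Prop :=
  [/\ (forall h, H h -> reduced h), H [::],
      (forall u v, H u -> H v -> H (reduce (u ++ v)))
    & (forall u, H u -> H (winv u))].
Definition finite_index (G : eqType) (H : word G -> Prop) : Prop :=
  exists t : seq (word G), forall w, reduced w ->
    exists2 u, u \in t & H (reduce (winv u ++ w)).

Definition admissible (n : nat) (c : word (gen n)) (alpha : 'I_n -> sym) : Prop :=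
  let f := interp alpha shift in
  [/\
      (forall w, reduced w -> w != [::] -> exists x, wact f w x != x),
      (forall x y, exists w, wact f w x = y) &
   [/\
      (forall w, reduced w -> ~ in_cyclic c w ->
         infinite_int (fun x => [/\ wact f c x = x,
                                    wact f c (wact f w x) = wact f w x
                                  & wact f w x <> x])),
      (forall k, (0 < k)%N -> infinitely_many_orbits f c k),
      (forall x, orbit_finite f c x)
    &
      (forall H, subgroup H -> finite_index H ->
         forall x y, exists2 h, H h & wact f h x = y)]].

Local Open Scope fset_scope.
Definition folner_seq (n : nat) (c : word (gen n)) (alpha : 'I_n -> sym)
  (A : nat -> {fset int}) : Prop :=
  let f := interp alpha shift in
  [/\ (forall g, reduced g -> forall eps : rat, 0 < eps ->
         exists K : nat, forall k : nat, (0 < k)%N -> (K <= k)%N ->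
           let gA := [fset wact f g x | x in A k] in
           ((#|` (A k `\` gA) `|` (gA `\` A k)|)%:R / (#|` A k|)%:R : rat) < eps),
      (forall k l, (0 < k)%N -> (0 < l)%N -> k != l -> A k `&` A l = fset0),
      (forall k, (0 < k)%N -> #|` A k| = k)
    & (forall k, (0 < k)%N -> forall x, x \in A k -> wact f c x = x)].

Definition agree_on (F : seq int) (s t : sym) : Prop :=
  forall x, x \in F -> sf s x = sf t x.
Definition open_in (Z U : sym -> Prop) : Prop :=
  (forall s, U s -> Z s) /\
  forall s, U s -> exists F : seq int, forall t, Z t -> agree_on F s t -> U t.
Definition closed_in (Z C : sym -> Prop) : Prop :=
  (forall s, C s -> Z s) /\ open_in Z (fun s => Z s /\ ~ C s).
Definition empty_interior_in (Z C : sym -> Prop) : Prop :=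
  forall U, open_in Z U -> (forall s, U s -> C s) -> forall s, ~ U s.
Definition meagre_in (Z M : sym -> Prop) : Prop :=
  exists F : nat -> sym -> Prop,
    (forall k, closed_in Z (F k) /\ empty_interior_in Z (F k)) /\
    (forall s, M s <-> exists k, F k s).
Definition generic_in (Z O : sym -> Prop) : Prop :=
  (forall s, O s -> Z s) /\ meagre_in Z (fun s => Z s /\ ~ O s).

(* Main.v *)
Require Import Defs.
From HB Require Import structures.
From mathcomp Require Import all_boot all_order all_algebra.
From mathcomp Require Import finmap.
Import Order.TTheory GRing.Theory Num.Theory.
Local Open Scope ring_scope.
Local Open Scope fset_scope.
Set Implicit Arguments. Unset Strict Implicit.
Lemma memE (S : {fset int}) x : (x \in S) = (x \in enum_fset S).
Proof. by []. Qed.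
Definition comp_sym (s r : sym) : sym.
refine (@Sym (sf r \o sf s) (sg s \o sg r) _ _).
- by move=> x /=; rewrite sfK sfK.
- by move=> x /=; rewrite sgK sgK.
Defined.
Lemma wact_inj (G : eqType) (f : G -> sym) w : injective (wact f w).
Proof.
elim: w => [|[g b] w IH] x y //= H; apply: IH.
by case: b H => H; [exact: (can_inj (@sfK _)) H | exact: (can_inj (@sgK _)) H].
Qed.
Section Swap.
Variables (S T : {fset int}).
Hypothesis hST : #|` S| = #|` T|.
Let u := enum_fset (S `\` T).
Let v := enum_fset (T `\` S).
Definition swapf (x : int) : int :=
  if x \in u then nth 0 v (index x u) else if x \in v then nth 0 u (index x v) else x.
Lemma size_uv : size u = size v.
Proof. by rewrite /u /v -!/(#|` _|) !cardfsD hST fsetIC. Qed.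
Lemma uv_disj x : x \in u -> x \notin v.
Proof. by rewrite -!memE !in_fsetD => /andP[_ ->]. Qed.
Lemma vu_disj x : x \in v -> x \notin u.
Proof. by rewrite -!memE !in_fsetD => /andP[_ ->]. Qed.
Lemma swap_u x : x \in u -> swapf x = nth 0 v (index x u).
Proof. by rewrite /swapf => ->. Qed.
Lemma swap_v x : x \in v -> swapf x = nth 0 u (index x v).
Proof. by move=> xv; rewrite /swapf (negbTE (vu_disj xv)) xv. Qed.
Lemma swap_n x : x \notin u -> x \notin v -> swapf x = x.
Proof. by move=> xu xv; rewrite /swapf (negbTE xu) (negbTE xv). Qed.
Lemma swapfK : involutive swapf.
Proof.
move=> x; have [xu|xu] := boolP (x \in u).
  have iu : (index x u < size v)%N by rewrite -size_uv index_mem.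
  have yv : nth 0 v (index x u) \in v by exact: mem_nth.
  by rewrite (swap_u xu) (swap_v yv) index_uniq ?fset_uniq // nth_index.
have [xv|xv] := boolP (x \in v); last by rewrite (swap_n xu xv) (swap_n xu xv).
have iu : (index x v < size u)%N by rewrite size_uv index_mem.
have yu : nth 0 u (index x v) \in u by exact: mem_nth.
by rewrite (swap_v xv) (swap_u yu) index_uniq ?fset_uniq // nth_index.
Qed.
Definition swap_sym : sym := Sym swapfK swapfK.
Lemma swap_out y : y \notin S -> y \notin T -> swapf y = y.
Proof.
move=> yS yT; apply: swap_n; rewrite -memE in_fsetD negb_and ?yS ?yT orbT //.
Qed.
Lemma swap_ST y : y \in S -> swapf y \in T.
Proof.
move=> yS; have [yu|yu] := boolP (y \in u).
  have iu : (index y u < size v)%N by rewrite -size_uv index_mem.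
  have H : nth 0 v (index y u) \in v by exact: mem_nth.
  by move: H; rewrite (swap_u yu) -memE in_fsetD => /andP[].
have yv : y \notin v by rewrite -memE in_fsetD yS.
rewrite (swap_n yu yv).
by move: yu; rewrite -memE in_fsetD yS andbT => /negbNE.
Qed.
Lemma swap_TS y : y \in T -> swapf y \in S.
Proof.
move=> yT.
have yu : y \notin u by rewrite -memE in_fsetD yT.
have [yv|yv] := boolP (y \in v).
  have iu : (index y v < size u)%N by rewrite size_uv index_mem.
  have H : nth 0 u (index y v) \in u by exact: mem_nth.
  by move: H; rewrite (swap_v yv) -memE in_fsetD => /andP[].
rewrite (swap_n yu yv).
by move: yv; rewrite -memE in_fsetD yT andbT => /negbNE.
Qed.
End Swap.
From Stdlib Require Import Classical.

Lemma avoid (A : nat -> {fset int}) :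
  (forall k l, (0 < k)%N -> (0 < l)%N -> k != l -> A k `&` A l = fset0) ->
  forall s : seq int, exists K, forall k, (K <= k)%N -> (0 < k)%N ->
    forall x, x \in s -> x \notin A k.
Proof.
move=> hdis; elim=> [|x s [K IH]]; first by exists 0%N.
case: (classic (exists k0, (0 < k0)%N /\ x \in A k0)) => [[k0 [k0p xk0]]|nx].
  exists (maxn K k0.+1) => k; rewrite geq_max => /andP[Kk k0k] kp y.
  rewrite inE => /orP[/eqP->|ys]; last exact: IH.
  apply/negP => xk.
  have : x \in A k0 `&` A k by rewrite in_fsetI xk0 xk.
  rewrite hdis // ?inE //.
  by rewrite neq_ltn k0k.
exists K => k Kk kp y; rewrite inE => /orP[/eqP->|ys]; last exact: IH.
by apply/negP => xk; apply: nx; exists k.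
Qed.

Lemma swap_comm (S T : {fset int}) (hST : #|` S| = #|` T|) (fd : int -> int) :
  injective fd -> (forall y, y \in S -> fd y = y) -> (forall y, y \in T -> fd y = y) ->
  forall y, swapf S T (fd y) = fd (swapf S T y).
Proof.
move=> fi hS hT y.
have [yS|yS] := boolP (y \in S).
  by rewrite hS // hT // swap_ST.
have [yT|yT] := boolP (y \in T).
  by rewrite hT // hS // swap_TS.
have fS : fd y \notin S.
  by apply/negP => H; move: (hS _ H) => /fi E; rewrite -E H in yS.
have fT : fd y \notin T.
  by apply/negP => H; move: (hT _ H) => /fi E; rewrite -E H in yT.
by rewrite !swap_out.
Qed.

Definition disjfam (A : nat -> {fset int}) :=
  forall k l, (0 < k)%N -> (0 < l)%N -> k != l -> A k `&` A l = fset0.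

Lemma dense (fc fd : int -> int) (fdi : injective fd) (A B : nat -> {fset int})
  (hAd : disjfam A) (hBd : disjfam B)
  (hAc : forall k, (0 < k)%N -> #|` A k| = k) (hBc : forall k, (0 < k)%N -> #|` B k| = k)
  (hAf : forall k, (0 < k)%N -> forall x, x \in A k -> fc x = x)
  (hBf : forall k, (0 < k)%N -> forall x, x \in B k -> fd x = x)
  (s : sym) (hs : forall x, sf s (fc x) = fd (sf s x)) (F : seq int) (N : nat) :
  exists t : sym, [/\ (forall x, sf t (fc x) = fd (sf t x)), agree_on F s t &
    exists k, [/\ (N <= k)%N, (0 < k)%N & [fset sf t x | x in A k] = B k]].
Proof.
have [KA hKA] := avoid hAd F.
have [KB hKB] := avoid hBd (map (sf s) F).
set k := maxn (maxn KA KB) N.+1.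
have kp : (0 < k)%N by rewrite leq_max orbT.
have kN : (N <= k)%N by rewrite leq_max leqnSn orbT.
have kA : (KA <= k)%N by rewrite leq_max leq_max leqnn.
have kB : (KB <= k)%N by rewrite leq_max leq_max leqnn orbT.
have si : injective (sf s) := can_inj (@sfK s).
set SS := [fset sf s x | x in A k].
have hST : #|` SS| = #|` B k|.
  by rewrite card_imfset //= hBc // hAc.
exists (comp_sym s (swap_sym hST)); split => /=.
- move=> x; rewrite hs swap_comm //.
    move=> y /imfsetP [a /= aA ->]; by rewrite -hs (hAf k).
  exact: hBf.
- move=> x xF /=; rewrite swap_out //.
    apply/negP => /imfsetP [a /= aA /si E].
    by move: (hKA k kA kp x xF); rewrite E aA.
  by apply: (hKB k kB kp); apply: map_f.
exists k; split => //; apply/fsetP => y; apply/imfsetP/idP => /=.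
  by move=> [x xA ->]; apply: (swap_ST hST); apply/imfsetP; exists x.
move=> yB; have /imfsetP [a /= aA E] := swap_TS hST yB.
by exists a => //; rewrite -E swapfK.
Qed.
From Stdlib Require Import ClassicalEpsilon.

Unset Implicit Arguments.
Lemma incr_ge (kk : nat -> nat) : (forall l, (kk l < kk l.+1)%N) -> forall l, (l <= kk l)%N.
Proof.
move=> h; elim=> [|l IH] //; exact: leq_ltn_trans IH (h l).
Qed.

Theorem proposition13 (n m : nat) (hn : (0 < n)%N) (hm : (0 < m)%N)
  (c : word (gen n)) (d : word (gen m))
  (hc : nontriv_cyc_reduced c) (hcb : expsum None c = 0)
  (hd : nontriv_cyc_reduced d) (hdb : expsum None d = 0)
  (alpha : 'I_n -> sym) (alpha' : 'I_m -> sym)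
  (A B : nat -> {fset int})
  (ha : admissible c alpha) (hA : folner_seq c alpha A)
  (ha' : admissible d alpha') (hB : folner_seq d alpha' B) :
  let Z := fun s : sym => forall x,
      sf s (wact (interp alpha shift) c x) = wact (interp alpha' shift) d (sf s x) in
  generic_in Z (fun s => Z s /\
    exists kk : nat -> nat,
      [/\ (forall l, (kk l < kk l.+1)%N), (forall l, (0 < kk l)%N)
        & forall l, [fset sf s x | x in A (kk l)] = B (kk l)]).
Proof.
move=> Z.
have fdi : injective (wact (interp alpha' shift) d) by move=> x y; apply: wact_inj.
case: hA => _ hAd hAc hAf; case: hB => _ hBd hBc hBf.
pose U N s := Z s /\ exists k, [/\ (N <= k)%N, (0 < k)%N & [fset sf s x | x in A k] = B k].
split; first by move=> s [].
exists (fun N s => Z s /\ ~ U N s); split.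
  move=> N; split.
    split; first by move=> s [].
    split; first by move=> s [].
    move=> s [Zs nF].
    have Us : U N s by apply: NNPP => H; apply: nF; split.
    case: Us => _ [k [kN kp ek]].
    exists (enum_fset (A k)) => t Zt agr; split => //.
    move=> [_ nU]; apply: nU; split => //; exists k; split => //.
    rewrite -ek; apply: eq_in_imfset => x xA /=; symmetry; exact: agr.
  move=> V [VZ Vo] VF s Vs.
  have [F hF] := Vo s Vs.
  have Zs := VZ s Vs.
  have [t [Zt agr [k kk]]] := dense fdi hAd hBd hAc hBc hAf hBf Zs F N.
  have Vt := hF t Zt agr.
  have [_ nU] := VF t Vt.
  by apply: nU; split => //; exists k.
move=> s; split.
  move=> [Zs nO]; apply: NNPP => H; apply: nO; split => //.
  have HU : forall N, exists k, [/\ (N <= k)%N, (0 < k)%N & [fset sf s x | x in A k] = B k].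
    move=> N; have : U N s by apply: NNPP => nU; apply: H; exists N; split.
    by case.
  pose g N := proj1_sig (constructive_indefinite_description _ (HU N)).
  have gP N : [/\ (N <= g N)%N, (0 < g N)%N & [fset sf s x | x in A (g N)] = B (g N)].
    by rewrite /g; case: constructive_indefinite_description.
  exists (fun l => iter l.+1 (fun k => g k.+1) 0%N); split.
  - by move=> l /=; case: (gP (iter l.+1 (fun k => g k.+1) 0%N).+1).
  - by move=> l /=; case: (gP (iter l (fun k => g k.+1) 0%N).+1).
  - by move=> l /=; case: (gP (iter l (fun k => g k.+1) 0%N).+1).
move=> [N [Zs nU]]; split => //; move=> [_ [kk [inc pos heq]]].
by apply: nU; split => //; exists (kk N); split => //; exact: incr_ge.
Qed.
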